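(* Let $G$ be a Hausdorff topological group, $Y$ a topological space with a topological partial action $\theta$ of $G$, and $X$ a nonempty compact space, with $\hat\theta$ the induced partial action on $C(X,Y)$. Then the enveloping space $Y_G$ is $G$-homeomorphic to a $G$-invariant subset $Z$ of the enveloping space $C(X,Y)_G$. Moreover, $Z$ is closed whenever $Y$ is Hausdorff.
   Context: A topological partial action of $G$ on a space $Y$ is a family $\{\theta_g\colon Y_{g^{-1}}\to Y_g\}_{g\in G}$ of homeomorphisms between open subsets with $Y_e=Y$, $\theta_e=\mathrm{id}_Y$, $\theta_{g^{-1}}=\theta_g^{-1}$, $\theta_g\circ\theta_h$ a restriction of $\theta_{gh}$. $C(X,Y)$ has the compact-open topology; $\hat\theta$ has $C(X,Y)_g=\{f: f(X)\subset Y_g\}$ and $\hat\theta_g(f)=\theta_g\circ f$. The enveloping space of a topological partial action $\theta$ on $W$ is $W_G=(G\times W)/R$ with the quotient topology, where $(g,x)R(h,y)$ iff $x\in W_{g^{-1}h}$ and $\theta_{h^{-1}g}(x)=y$; it carries the continuous global action $g\cdot[h,x]=[gh,x]$. A set is invariant if it is stable under this action. A $G$-homeomorphism between spaces with (partial) actions is a homeomorphism $f$ such that $f$ and $f^{-1}$ are $G$-maps, where a continuous map $f$ is a $G$-map if whenever $g\cdot x$ is defined, $g\cdot f(x)$ is defined and equals $f(g\cdot x)$; here $Z$ carries the restriction of the global action of $C(X,Y)_G$. *)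

(* Defs.v *)
From HB Require Import structures.
From mathcomp Require Import all_boot all_order all_algebra.
From mathcomp Require Import all_classical all_reals all_analysis.
Set Implicit Arguments. Unset Strict Implicit. Unset Printing Implicit Defensive.
Local Open Scope classical_set_scope.

Definition is_topological_group (G : topologicalType)
  (mul : G -> G -> G) (inv : G -> G) (one : G) : Prop :=
  [/\ forall a b c, mul a (mul b c) = mul (mul a b) c,
      forall a, mul one a = a /\ mul a one = a,
      forall a, mul (inv a) a = one /\ mul a (inv a) = one,
      continuous (fun p : G * G => mul p.1 p.2) &
      continuous inv].

(* D g is the open set Y_g; theta g is a total function on Y of which  *)
(* only the restriction to Y_{g^-1} = D (inv g) matters.               *)
Definition is_top_partial_action (G : topologicalType)
  (mul : G -> G -> G) (inv : G -> G) (one : G)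
  (Y : topologicalType) (D : G -> set Y) (theta : G -> Y -> Y) : Prop :=
  [/\ (forall g, open (D g)),
      D one = setT /\ (forall y, theta one y = y),
      (forall g y, D (inv g) y -> D g (theta g y) /\ theta (inv g) (theta g y) = y),
      (forall g h y, D (inv h) y -> D (inv g) (theta h y) ->
          D (inv (mul g h)) y /\ theta g (theta h y) = theta (mul g h) y) &
      (* each theta_g is continuous on Y_{g^-1} (so a homeomorphism onto Y_g) *)
      (forall g, {within D (inv g), continuous (theta g)})].

(* Enveloping space of a partial action on W, given by its domains     *)
(* Dom g = W_g and the graph Th k x y  <->  "theta_k(x) = y".          *)
Section Enveloping.
Variables (G W : topologicalType) (mul : G -> G -> G) (inv : G -> G).
Variables (Dom : G -> set W) (Th : G -> W -> W -> Prop).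

Definition envR (p q : G * W) : Prop :=
  Dom (mul (inv p.1) q.1) p.2 /\ Th (mul (inv q.1) p.1) p.2 q.2.

Definition envclass (p : G * W) : set (G * W) := [set q | envR p q].

Definition envelope : Type := {A : set (G * W) | exists p, A = envclass p}.

HB.instance Definition _ := gen_eqMixin envelope.
HB.instance Definition _ := gen_choiceMixin envelope.

Definition env_pi (p : G * W) : envelope := exist _ (envclass p) (ex_intro _ p erefl).

Definition env_open (U : set envelope) : Prop := open (env_pi @^-1` U).

Program Definition env_topology_mixin :=
  @isOpenTopological.Build envelope env_open _ _ _.
Next Obligation. by rewrite /env_open preimage_setT; exact: openT. Qed.
Next Obligation. by move=> ? ? ? ?; exact: openI. Qed.
Next Obligation. by move=> I f ofi; apply: bigcup_open => i _; exact: ofi. Qed.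
HB.instance Definition _ := env_topology_mixin.

Definition env_repr (a : envelope) : G * W := projT1 (cid (svalP a)).

Definition env_act (g : G) (a : envelope) : envelope :=
  env_pi (mul g (env_repr a).1, (env_repr a).2).

End Enveloping.

Definition Cfun (X Y : topologicalType) : Type :=
  set_type [set f : @compact_open X Y | continuous (f : X -> Y)].

Definition hat_dom (G X Y : topologicalType) (D : G -> set Y) (g : G) : set (Cfun X Y) :=
  [set f | forall t : X, D g (set_val f t)].
Definition hat_th (G X Y : topologicalType) (theta : G -> Y -> Y)
  (k : G) (f f' : Cfun X Y) : Prop :=
  forall t : X, set_val f' t = theta k (set_val f t).

Definition th_graph (G Y : topologicalType) (theta : G -> Y -> Y)
  (k : G) (x y : Y) : Prop := theta k x = y.

Definition G_invariant (G B : Type) (actB : G -> B -> B) (Z : set B) : Prop :=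
  forall g z, Z z -> Z (actB g z).

Definition G_homeomorphic_to_subset (G : Type) (A B : topologicalType)
  (actA : G -> A -> A) (actB : G -> B -> B) (Z : set B) : Prop :=
  exists (f : A -> B) (finv : B -> A),
    [/\ (forall a, Z (f a)) /\ (forall a, finv (f a) = a),
        (forall z, Z z -> f (finv z) = z),
        continuous f,
        {within Z, continuous finv} &
        (forall g a, f (actA g a) = actB g (f a)) /\
        (forall g z, Z z -> finv (actB g z) = actA g (finv z))].

Arguments hat_dom {G} X {Y} D g.
Arguments hat_th {G} X {Y} theta k f f'.
Arguments env_act {G W} mul inv Dom Th g a.

(* Main.v *)
Require Import Defs.
From HB Require Import structures.
From mathcomp Require Import all_boot all_order all_algebra.
From mathcomp Require Import all_classical all_reals all_analysis.
Local Open Scope classical_set_scope.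
Set Implicit Arguments. Unset Strict Implicit.

Lemma cont_pair_map (A B C : topologicalType) (c : B -> C) :
  continuous c -> continuous (fun p : A * B => (p.1, c p.2)).
Proof.
move=> cc [a b]; apply: cvg_pair => /=; first exact: cvg_fst.
by apply: cvg_comp; [exact: cvg_snd | exact: cc].
Qed.

Lemma grp_inv_inv (T : Type) (mul : T -> T -> T) (inv : T -> T) (one : T)
  (A : forall a b c, mul a (mul b c) = mul (mul a b) c)
  (I : forall a, mul one a = a /\ mul a one = a)
  (V : forall a, mul (inv a) a = one /\ mul a (inv a) = one) a :
  inv (inv a) = a.
Proof.
have e1 := (I (inv (inv a))).2; rewrite -(V a).1 A (V (inv a)).1 in e1.
by rewrite -e1 (I a).1.
Qed.

Lemma grp_inv_mul (T : Type) (mul : T -> T -> T) (inv : T -> T) (one : T)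
  (A : forall a b c, mul a (mul b c) = mul (mul a b) c)
  (I : forall a, mul one a = a /\ mul a one = a)
  (V : forall a, mul (inv a) a = one /\ mul a (inv a) = one) a b :
  inv (mul a b) = mul (inv b) (inv a).
Proof.
have h : mul (mul a b) (mul (inv b) (inv a)) = one.
  by rewrite -A (A b) (V b).2 (I _).1 (V a).2.
by rewrite -[LHS](I _).2 -h A (V _).1 (I _).1.
Qed.

Lemma grp_cancel (T : Type) (mul : T -> T -> T) (inv : T -> T) (one : T)
  (A : forall a b c, mul a (mul b c) = mul (mul a b) c)
  (I : forall a, mul one a = a /\ mul a one = a)
  (V : forall a, mul (inv a) a = one /\ mul a (inv a) = one) g a b :
  mul (inv (mul g a)) (mul g b) = mul (inv a) b.
Proof.
by rewrite (grp_inv_mul A I V) -A (A (inv g)) (V g).1 (I b).1.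
Qed.

Lemma grp_mid (T : Type) (mul : T -> T -> T) (inv : T -> T) (one : T)
  (A : forall a b c, mul a (mul b c) = mul (mul a b) c)
  (I : forall a, mul one a = a /\ mul a one = a)
  (V : forall a, mul (inv a) a = one /\ mul a (inv a) = one) a b c :
  mul (mul (inv a) b) (mul (inv b) c) = mul (inv a) c.
Proof. by rewrite -A (A b) (V b).2 (I c).1. Qed.

Lemma env_surj (G W : topologicalType) (mul : G -> G -> G) (inv : G -> G)
  (Dom : G -> set W) (Th : G -> W -> W -> Prop)
  (a : envelope mul inv Dom Th) : a = env_pi mul inv Dom Th (env_repr a).
Proof.
case: a => A HA; rewrite /env_pi /env_repr /=; apply: eq_exist.
idtac.
set c := cid _; exact: (proj2_sig c).
Qed.

Lemma env_pi_inj (G W : topologicalType) (mul : G -> G -> G) (inv : G -> G)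
  (Dom : G -> set W) (Th : G -> W -> W -> Prop)
  (Hrefl : forall p, envR mul inv Dom Th p p) p q :
  env_pi mul inv Dom Th p = env_pi mul inv Dom Th q -> envR mul inv Dom Th p q.
Proof.
move=> /(congr1 sval) /= E.
have : envclass mul inv Dom Th q q by exact: Hrefl.
by rewrite -E.
Qed.

Lemma env_pi_eq (G W : topologicalType) (mul : G -> G -> G) (inv : G -> G)
  (Dom : G -> set W) (Th : G -> W -> W -> Prop)
  (Hsym : forall p q, envR mul inv Dom Th p q -> envR mul inv Dom Th q p)
  (Htrans : forall p q r, envR mul inv Dom Th p q -> envR mul inv Dom Th q r ->
     envR mul inv Dom Th p r) p q :
  envR mul inv Dom Th p q -> env_pi mul inv Dom Th p = env_pi mul inv Dom Th q.
Proof.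
move=> pq; rewrite /env_pi; apply: eq_exist; apply/seteqP; split => r /=.
  by move=> pr; apply: Htrans (Hsym _ _ pq) pr.
by move=> qr; apply: Htrans pq qr.
Qed.

Lemma envY_refl (G Y : topologicalType) (mul : G -> G -> G) (inv : G -> G) (one : G)
  (HG : is_topological_group mul inv one) (D : G -> set Y) (theta : G -> Y -> Y)
  (Htheta : is_top_partial_action mul inv one D theta) p :
  envR mul inv D (th_graph theta) p p.
Proof.
case: HG => A I V _ _; case: Htheta => _ [D1 th1] H3 H4 _.
by rewrite /envR /th_graph (V _).1 D1 th1.
Qed.

Lemma envY_sym (G Y : topologicalType) (mul : G -> G -> G) (inv : G -> G) (one : G)
  (HG : is_topological_group mul inv one) (D : G -> set Y) (theta : G -> Y -> Y)
  (Htheta : is_top_partial_action mul inv one D theta) p q :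
  envR mul inv D (th_graph theta) p q -> envR mul inv D (th_graph theta) q p.
Proof.
case: HG => A I V _ _; case: Htheta => _ [D1 th1] H3 H4 _.
rewrite /envR /th_graph => -[Dp <-].
have e : inv (mul (inv q.1) p.1) = mul (inv p.1) q.1.
  by rewrite (grp_inv_mul A I V) (grp_inv_inv A I V).
rewrite -e in Dp; have [] := H3 _ _ Dp.
by rewrite e.
Qed.

Lemma envY_trans (G Y : topologicalType) (mul : G -> G -> G) (inv : G -> G) (one : G)
  (HG : is_topological_group mul inv one) (D : G -> set Y) (theta : G -> Y -> Y)
  (Htheta : is_top_partial_action mul inv one D theta) p q r :
  envR mul inv D (th_graph theta) p q -> envR mul inv D (th_graph theta) q r ->
  envR mul inv D (th_graph theta) p r.
Proof.
case: HG => A I V _ _; case: Htheta => _ [D1 th1] H3 H4 _.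
rewrite /envR /th_graph => -[Dp Eq] [Dq <-].
have e : forall a b, inv (mul (inv a) b) = mul (inv b) a.
  by move=> a b; rewrite (grp_inv_mul A I V) (grp_inv_inv A I V).
rewrite -e in Dp; rewrite -Eq -e in Dq.
have [] := H4 _ _ _ Dp Dq.
rewrite (grp_mid A I V) e => Dd E; split => //.
by rewrite -E Eq.
Qed.

Definition cstC (X Y : topologicalType) (y : Y) : Cfun X Y :=
  exist _ ((fun _ : X => y) : @compact_open X Y) (mem_set (@cst_continuous X Y y)).

Lemma cstC_val (X Y : topologicalType) (y : Y) t : set_val (cstC X y) t = y.
Proof. by []. Qed.

Lemma ev_cont (X Y : topologicalType) (t : X) :
  continuous (fun f : Cfun X Y => set_val f t).
Proof.
apply/continuousP => O oO.
have -> : (fun f : Cfun X Y => set_val f t) @^-1` O =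
   (set_val : Cfun X Y -> @compact_open X Y) @^-1` [set g : @compact_open X Y | g @` [set t] `<=` O].
  apply/seteqP; split => f /=.
    by move=> Oft _ [s -> <-].
  by move=> h; apply: h; exists t.
have : continuous (set_val : Cfun X Y -> @compact_open X Y).
  exact: initial_continuous.
move/continuousP; apply.
by apply: compact_open_open => //; exact: compact_set1.
Qed.

Lemma cstC_cont (X Y : topologicalType) : continuous (@cstC X Y).
Proof.
apply: (@continuous_comp_initial _ _ _ (set_val : Cfun X Y -> @compact_open X Y)).
move=> y; apply/compact_open_cvgP => K O _ oO sKO.
have [Oy|nOy] := pselect (O y).
  apply: filterS (open_nbhs_nbhs (conj oO Oy)).
  by move=> y' Oy' _ [k _ <-].
apply: filterE => y' z [k Kk _]; exfalso; apply: nOy; apply: sKO; by exists k.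
Qed.

Lemma envC_iff (G X Y : topologicalType) (mul : G -> G -> G) (inv : G -> G)
  (D : G -> set Y) (theta : G -> Y -> Y) (p q : G * Cfun X Y) :
  envR mul inv (hat_dom X D) (hat_th X theta) p q <->
  forall t, envR mul inv D (th_graph theta) (p.1, set_val p.2 t) (q.1, set_val q.2 t).
Proof.
rewrite /envR /hat_dom /hat_th /th_graph /=; split.
  by move=> [H1 H2] t; split; [exact: H1 | rewrite H2].
by move=> H; split=> t; [exact: (H t).1 | rewrite (H t).2].
Qed.

Lemma env_act_pi (G W : topologicalType) (mul : G -> G -> G) (inv : G -> G) (one : G)
  (Dom : G -> set W) (Th : G -> W -> W -> Prop)
  (A : forall a b c, mul a (mul b c) = mul (mul a b) c)
  (I : forall a, mul one a = a /\ mul a one = a)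
  (V : forall a, mul (inv a) a = one /\ mul a (inv a) = one)
  (Hrefl : forall p, envR mul inv Dom Th p p)
  (Hsym : forall p q, envR mul inv Dom Th p q -> envR mul inv Dom Th q p)
  (Htrans : forall p q r, envR mul inv Dom Th p q -> envR mul inv Dom Th q r ->
     envR mul inv Dom Th p r) g p :
  env_act mul inv Dom Th g (env_pi mul inv Dom Th p) =
  env_pi mul inv Dom Th (mul g p.1, p.2).
Proof.
rewrite /env_act; set r := env_repr _.
have E : envR mul inv Dom Th r p.
  by apply: env_pi_inj => //; rewrite /r -env_surj.
apply: env_pi_eq => //; move: E; rewrite /envR /=.
by rewrite !(grp_cancel A I V).
Qed.

Lemma ev_snd_cont (G X Y : topologicalType) (t : X) :
  continuous (fun q : G * Cfun X Y => set_val q.2 t).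
Proof.
move=> q; apply: (@cvg_comp _ _ _ snd (fun f : Cfun X Y => set_val f t)).
  exact: cvg_snd.
exact: (@ev_cont X Y t).
Qed.

Unset Implicit Arguments. Set Strict Implicit.

Theorem lemma3p4
  (G : topologicalType) (mul : G -> G -> G) (inv : G -> G) (one : G)
  (HG : is_topological_group mul inv one) (HGhaus : hausdorff_space G)
  (Y : topologicalType) (D : G -> set Y) (theta : G -> Y -> Y)
  (Htheta : is_top_partial_action mul inv one D theta)
  (X : topologicalType) (Xne : inhabited X) (Xcpt : compact [set: X]) :
  exists Z : set (envelope mul inv (hat_dom X D) (hat_th X theta)),
    [/\ G_invariant (env_act mul inv (hat_dom X D) (hat_th X theta)) Z,
        G_homeomorphic_to_subset
          (env_act mul inv D (th_graph theta))
          (env_act mul inv (hat_dom X D) (hat_th X theta)) Z &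
        (hausdorff_space Y -> closed Z)].
Proof.
have [x0] := Xne.
have [A I V _ _] := HG.
pose RY := envR mul inv D (th_graph theta).
pose RC := envR mul inv (hat_dom X D) (hat_th X theta).
pose piY := env_pi mul inv D (th_graph theta).
pose piC := env_pi mul inv (hat_dom X D) (hat_th X theta).
have reflY : forall p, RY p p by move=> p; exact: (envY_refl HG Htheta).
have symY : forall p q, RY p q -> RY q p by move=> p q; exact: (envY_sym HG Htheta).
have transY : forall p q r, RY p q -> RY q r -> RY p r by move=> p q r; exact: (envY_trans HG Htheta).
have reflC : forall p, RC p p by move=> p; rewrite /RC; apply/envC_iff => t; exact: reflY.
have symC : forall p q, RC p q -> RC q p.
  rewrite /RC => p q H; move: H => /envC_iff H.
  apply/envC_iff => t; exact: symY (H t).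
have transC : forall p q r, RC p q -> RC q r -> RC p r.
  rewrite /RC => p q r H1 H2; move: H1 H2 => /envC_iff H1 /envC_iff H2.
  apply/envC_iff => t; exact: transY (H1 t) (H2 t).
have eqY : forall p q, RY p q -> piY p = piY q by move=> p q; exact: env_pi_eq.
have eqC : forall p q, RC p q -> piC p = piC q by move=> p q; exact: env_pi_eq.
have injY : forall p q, piY p = piY q -> RY p q by move=> p q; exact: env_pi_inj.
have injC : forall p q, piC p = piC q -> RC p q by move=> p q; exact: env_pi_inj.
have actY : forall g p, env_act mul inv D (th_graph theta) g (piY p) = piY (mul g p.1, p.2).
  by move=> g p; exact: env_act_pi.
have actC : forall g p, env_act mul inv (hat_dom X D) (hat_th X theta) g (piC p)
    = piC (mul g p.1, p.2).
  by move=> g p; exact: env_act_pi.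
have surjY : forall a, exists p, a = piY p by move=> a; exists (env_repr a); exact: env_surj.
have surjC : forall a, exists p, a = piC p by move=> a; exists (env_repr a); exact: env_surj.
pose F := fun a : envelope mul inv D (th_graph theta) =>
  piC ((env_repr a).1, cstC X (env_repr a).2).
pose finv := fun b : envelope mul inv (hat_dom X D) (hat_th X theta) =>
  piY ((env_repr b).1, set_val (env_repr b).2 x0).
have FE : forall p, F (piY p) = piC (p.1, cstC X p.2).
  move=> p; rewrite /F; set r := env_repr _.
  have E : RY r p by apply: injY; exact: (esym (env_surj _)).
  by apply: eqC; apply/envC_iff => t /=.
have finvE : forall p, finv (piC p) = piY (p.1, set_val p.2 x0).
  move=> p; rewrite /finv; set r := env_repr _.
  have E : RC r p by apply: injC; exact: (esym (env_surj _)).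
  by apply: eqY; move: E; rewrite /RC => /envC_iff; apply.
pose Z := [set b | exists p : G * Y, b = piC (p.1, cstC X p.2)].
exists Z; split.
- move=> g _ [p ->]; rewrite actC; by exists (mul g p.1, p.2).
- exists F, finv; split.
  + split.
      move=> a; have [p ->] := surjY a; rewrite FE /Z /=; by exists p.
    move=> a; have [p ->] := surjY a; rewrite FE finvE; by case: p.
  + by move=> _ [p ->]; rewrite finvE FE; case: p.
  + apply/continuousP => U oU.
    change (open (piY @^-1` (F @^-1` U))).
    have -> : piY @^-1` (F @^-1` U) =
        (fun p : G * Y => (p.1, cstC X p.2)) @^-1` (piC @^-1` U).
      by apply/seteqP; split => p /=; rewrite FE.
    move: (@cont_pair_map G _ _ _ (@cstC_cont X Y)) => /continuousP; apply; exact: oU.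
  + apply: continuous_subspaceT; apply/continuousP => U oU.
    change (open (piC @^-1` (finv @^-1` U))).
    have -> : piC @^-1` (finv @^-1` U) =
        (fun p : G * Cfun X Y => (p.1, set_val p.2 x0)) @^-1` (piY @^-1` U).
      by apply/seteqP; split => p /=; rewrite finvE.
    move: (@cont_pair_map G _ _ _ (@ev_cont X Y x0)) => /continuousP; apply; exact: oU.
  + split.
      by move=> g a; have [p ->] := surjY a; rewrite actY !FE actC.
    by move=> g z _; have [p ->] := surjC z; rewrite actC !finvE actY.
- move=> hY; rewrite -[Z]setCK; apply: open_closedC.
  change (open (piC @^-1` (~` Z))).
  rewrite openE => p Pp.
  have [t1 [t2 ne]] : exists t1 t2, set_val p.2 t1 <> set_val p.2 t2.
    apply: contrapT => H; apply: Pp; exists (p.1, set_val p.2 x0).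
    apply: eqC; rewrite /RC; apply/envC_iff => t /=.
    have -> : set_val p.2 t = set_val p.2 x0.
      by apply: contrapT => ne; apply: H; exists t, x0.
    exact: reflY.
  have hne : set_val p.2 t1 != set_val p.2 t2 by apply/eqP.
  move: hY; rewrite open_hausdorff => /(_ _ _ hne) [[U1 U2] /= [U1x U2y] [oU1 oU2 /eqP U12]].
  pose W := [set q : G * Cfun X Y | U1 (set_val q.2 t1) /\ U2 (set_val q.2 t2)].
  have oW : open W.
    have -> : W = (fun q : G * Cfun X Y => set_val q.2 t1) @^-1` U1 `&`
                  (fun q : G * Cfun X Y => set_val q.2 t2) @^-1` U2 by [].
    apply: openI.
      by move: (@ev_snd_cont G X Y t1) => /continuousP; apply.
    by move: (@ev_snd_cont G X Y t2) => /continuousP; apply.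
  have Wp : W p by split; apply: set_mem.
  apply: filterS (open_nbhs_nbhs (conj oW Wp)).
  move=> q [Wq1 Wq2] [r Er].
  have := injC _ _ Er => /symC; rewrite /RC => /envC_iff H.
  have E1 := (H t1).2; have E2 := (H t2).2.
  rewrite /th_graph /= in E1 E2.
  have : (U1 `&` U2) (set_val q.2 t1) by split => //; rewrite -E1 E2.
  by rewrite U12.
Qed.
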